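(* For any finite subset $E\subseteq\mathbb{N}$ with $|E|\ge2$, $$\mathcal{F}_E=\Big\{B\subseteq\mathbb{N}:\exists L\subseteq\Pi\setminus A_E\text{ finite with }\bigcap_{p\in L}p\mathbb{N}\cap\bigcap_{p\in A_E\setminus\Pi_E}\big(\{0,\alpha_E(p)\}+p\mathbb{Z}\big)\subseteq B\Big\},$$ where $\bigcap_{p\in\emptyset}p\mathbb{N}=\mathbb{N}$.
   Context: $\mathbb{N}=\{1,2,\dots\}$, $\mathbb{N}_0=\{0\}\cup\mathbb{N}$, $\Pi$ the set of primes, $\Pi_z$ the set of prime divisors of $z$; $p\mathbb{N}=\{pn:n\in\mathbb{N}\}$, $\{0,k\}+p\mathbb{Z}=p\mathbb{Z}\cup(k+p\mathbb{Z})$. The Kirch topology $\tau_K$ on $\mathbb{N}$ is generated by the base of all $a+b\mathbb{N}_0=\{a+bn:n\in\mathbb{N}_0\}$ with $a,b\in\mathbb{N}$ coprime and $b$ square-free. Closures $\overline{U}$ are in $\tau_K$; $\tau_x=\{U\in\tau_K:x\in U\}$. For finite $E\subseteq\mathbb{N}$, $\mathcal{F}_E=\{B\subseteq\mathbb{N}:\exists (U_x)_{x\in E}\in\prod_{x\in E}\tau_x\ (\bigcap_{x\in E}\overline{U_x}\subseteq B)\}$. For nonempty finite $E$: $\Pi_E=\bigcap_{z\in E}\Pi_z$; $A_E=\{p\in\Pi:\exists k\in\mathbb{N}\ (E\subseteq\{0,k\}+p\mathbb{Z})\}$; $\alpha_E:A_E\to\mathbb{N}_0$ is the unique function with $0\le\alpha_E(p)<p$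 and $E\subseteq\{0,\alpha_E(p)\}+p\mathbb{Z}$ for all $p\in A_E$, $\alpha_E(2)=1$, and $\alpha_E(p)=0$ for $p\in\Pi_E\setminus\{2\}$. *)

(* Defs.v *)
(* Subsets of N = {1,2,...} are predicates on nat;
   only their positive elements matter. *)
From mathcomp Require Import all_boot.
Set Implicit Arguments. Unset Strict Implicit. Unset Printing Implicit Defensive.

Definition nset := nat -> Prop.

Definition kirch_base (a b : nat) : nset := fun n => exists k : nat, n = a + b * k.

Definition kirch_base_ok (a b : nat) : Prop :=
  0 < a /\ 0 < b /\ coprime a b /\ (forall p, prime p -> ~~ (p * p %| b)).

Definition kirch_open (U : nset) : Prop :=
  (forall n, U n -> 0 < n) /\
  forall x, U x -> exists a b, kirch_base_ok a b /\ kirch_base a b x /\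
                        (forall n, kirch_base a b n -> U n).

Definition kirch_closure (U : nset) : nset := fun x =>
  0 < x /\ forall V, kirch_open V -> V x -> exists y, V y /\ U y.

(* F_E for a finite E (given as a duplicate-free list) *)
Definition F_E (E : seq nat) (B : nset) : Prop :=
  exists U : nat -> nset,
    (forall x, x \in E -> kirch_open (U x) /\ U x x) /\
    (forall n, (forall x, x \in E -> kirch_closure (U x) n) -> B n).

Definition Pi_E (E : seq nat) (p : nat) : Prop :=
  prime p /\ forall z, z \in E -> p %| z.

Definition in_0k_pZ (k p n : nat) : Prop := n = 0 %[mod p] \/ n = k %[mod p].

Definition A_E (E : seq nat) (p : nat) : Prop :=
  prime p /\ exists k, 0 < k /\ forall z, z \in E -> in_0k_pZ k p z.

(* the defining properties of alpha_E (a function on A_E, extended arbitrarily) *)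
Definition is_alpha_E (E : seq nat) (alpha : nat -> nat) : Prop :=
  (forall p, A_E E p -> alpha p < p /\ forall z, z \in E -> in_0k_pZ (alpha p) p z) /\
  alpha 2 = 1 /\
  (forall p, Pi_E E p -> p != 2 -> alpha p = 0).

Definition multN (p n : nat) : Prop := exists m, 0 < m /\ n = p * m.

(* Main.v *)
Require Import Defs.
From mathcomp Require Import all_boot zify.
Set Implicit Arguments. Unset Strict Implicit. Unset Printing Implicit Defensive.

Definition sqf (b : nat) := forall p, prime p -> ~~ (p * p %| b).

Lemma cop_prime_false a b p : coprime a b -> prime p -> p %| a -> p %| b -> False.
Proof.
move=> /eqP Hc Hp Ha Hb.
have : p %| gcdn a b by rewrite dvdn_gcd Ha Hb.
rewrite Hc dvdn1 => /eqP E; by rewrite E in Hp.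
Qed.

Lemma cop_by_primes m n : 0 < m ->
  (forall p, prime p -> p %| m -> p %| n -> False) -> coprime m n.
Proof.
move=> Hm H; rewrite /coprime.
have Hg : 0 < gcdn m n by rewrite gcdn_gt0 Hm.
case: eqP => // Hne.
have Hlt : 1 < gcdn m n by lia.
exfalso; apply: (H (pdiv (gcdn m n))); first exact: pdiv_prime.
  exact: dvdn_trans (pdiv_dvd _) (dvdn_gcdl _ _).
exact: dvdn_trans (pdiv_dvd _) (dvdn_gcdr _ _).
Qed.

Lemma sqf_dvd m d : sqf m -> 0 < m -> d %| m -> sqf d.
Proof. move=> H Hm Hd p Hp; apply/negP => Hpp; have := H p Hp. by rewrite (dvdn_trans Hpp Hd). Qed.

Lemma sqf_mod n x m : 0 < m -> sqf m ->
  (forall p, prime p -> p %| m -> n = x %[mod p]) -> n = x %[mod m].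
Proof.
elim: m {-2}m (leqnn m) => [|M IH] m Hle Hm Hs H; first by lia.
case: (eqVneq m 1) => [->|Hne1]; first by rewrite !modn1.
have Hm1 : 1 < m by lia.
set p := pdiv m.
have Hp : prime p := pdiv_prime Hm1.
have Hpm : p %| m := pdiv_dvd m.
have Hdef : m = p * (m %/ p) by rewrite mulnC divnK.
have Hm' : 0 < m %/ p by rewrite divn_gt0 ?prime_gt0 // dvdn_leq.
have Hcop : coprime p (m %/ p).
  rewrite prime_coprime //; apply/negP => Hd.
  have := Hs p Hp; rewrite [X in _ %| X]Hdef dvdn_pmul2l ?prime_gt0 ?Hd //.
have Hd' : m %/ p %| m by rewrite {2}Hdef dvdn_mull.
apply/eqP; rewrite Hdef chinese_remainder //; apply/andP; split; apply/eqP.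
  exact: H.
apply: (IH (m %/ p)) => //.
- have := ltn_Pdiv (prime_gt1 Hp) Hm; lia.
- exact: sqf_dvd Hs Hm _.
- move=> q Hq Hqd; apply: H => //; exact: dvdn_trans Hqd Hd'.
Qed.
Lemma gen_crt b d n x : 0 < b -> 0 < d -> sqf d ->
  (forall p, prime p -> p %| b -> p %| d -> n = x %[mod p]) ->
  exists y, y = x %[mod b] /\ y = n %[mod d].
Proof.
move=> Hb Hd Hs H.
set d1 := gcdn d b; set d2 := d %/ d1.
have Hd1 : 0 < d1 by rewrite gcdn_gt0 Hd.
have Hdef : d = d1 * d2 by rewrite mulnC divnK // dvdn_gcdl.
have Hd2 : 0 < d2 by move: Hdef Hd; case: d2 => //; rewrite muln0 => ->.
have Hd1d : d1 %| d by rewrite dvdn_gcdl.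
have Hd2d : d2 %| d by apply/dvdnP; exists d1.
have Hcb : coprime b d2.
  apply: cop_by_primes => // p Hp H1 H2.
  have H3 : p %| d1 by rewrite dvdn_gcd H1 (dvdn_trans H2 Hd2d).
  have := Hs p Hp; by rewrite [X in _ %| X]Hdef dvdn_mul.
have Hc12 : coprime d1 d2.
  apply: cop_by_primes => // p Hp H1 H2.
  have := Hs p Hp; by rewrite [X in _ %| X]Hdef dvdn_mul.
exists (chinese b d2 x n); split; first exact: chinese_modl.
apply/eqP; rewrite Hdef chinese_remainder //; apply/andP; split; apply/eqP; last exact: chinese_modr.
have Hd1b : d1 %| b by rewrite dvdn_gcdr.
rewrite -(modn_dvdm _ Hd1b) chinese_modl // (modn_dvdm _ Hd1b).
symmetry; apply: sqf_mod => //; first exact: sqf_dvd Hs Hd Hd1d.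
move=> p Hp Hpd; apply: H => //.
  exact: dvdn_trans Hpd Hd1b.
exact: dvdn_trans Hpd Hd1d.
Qed.

Lemma mod_eq_add x y b : x <= y -> y = x %[mod b] -> exists i, y = x + b * i.
Proof.
move=> Hle /eqP; rewrite eqn_mod_dvd // => Hd.
exists ((y - x) %/ b); rewrite mulnC divnK //; lia.
Qed.

Fixpoint sqfprod (x N : nat) : nat :=
  match N with
  | 0 => 1
  | N'.+1 => if prime N'.+1 && ~~ (N'.+1 %| x) then N'.+1 * sqfprod x N' else sqfprod x N'
  end.

Lemma sqfprod_gt0 x N : 0 < sqfprod x N.
Proof. elim: N => //= N IH; case: ifP => // _; by rewrite muln_gt0 IH. Qed.

Lemma sqfprod_div x N p : prime p -> p %| sqfprod x N -> p <= N /\ ~~ (p %| x).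
Proof.
move=> Hp; elim: N => [|N IH] /=.
  by rewrite dvdn1 => /eqP E; rewrite E in Hp.
case: ifP => [/andP [HN Hx]|_].
  rewrite Euclid_dvdM // => /orP [|/IH [? ?]]; last by split => //; lia.
  by rewrite dvdn_prime2 // => /eqP ->.
by move/IH => [? ?]; split => //; lia.
Qed.

Lemma sqfprod_dvd x N p : prime p -> p <= N -> ~~ (p %| x) -> p %| sqfprod x N.
Proof.
move=> Hp; elim: N => [|N IH] /=; first by move: (prime_gt0 Hp); lia.
move=> Hle Hx; case: (eqVneq p N.+1) => [E|Hne].
  by rewrite -E Hp Hx /= dvdn_mulr.
have Hle' : p <= N by lia.
case: ifP => _; last exact: IH.
by rewrite dvdn_mull // IH.
Qed.

Lemma sqfprod_sqf x N : sqf (sqfprod x N).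
Proof.
move=> p Hp; elim: N => [|N IH] /=.
  apply/negP => /dvdn_leq; move: (prime_gt1 Hp); nia.
case: ifP => // /andP [HN _].
case: (eqVneq p N.+1) => [E|Hne].
  rewrite -E dvdn_pmul2l ?prime_gt0 //; apply/negP => /(sqfprod_div Hp) [? _]; lia.
rewrite Gauss_dvdr //.
by rewrite coprimeMl !prime_coprime // dvdn_prime2 // Hne.
Qed.

Lemma sqfprod_cop x N : coprime x (sqfprod x N).
Proof.
elim: N => [|N IH] /=; first by rewrite coprimen1.
case: ifP => // /andP [HN Hx].
by rewrite coprimeMr IH andbT coprime_sym prime_coprime.
Qed.
From Stdlib Require Import Classical.

Lemma base_ok_prime p n : prime p -> 0 < n -> ~~ (p %| n) -> kirch_base_ok n p.
Proof.
move=> Hp Hn Hpn; split => //; split; first exact: prime_gt0.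
split; first by rewrite coprime_sym prime_coprime.
move=> q Hq; apply/negP => Hqq.
have Hqp : q %| p by apply: dvdn_trans Hqq; apply: dvdn_mulr.
move: Hqp; rewrite dvdn_prime2 // => /eqP E; subst q.
move: (dvdn_leq (prime_gt0 Hp) Hqq) (prime_gt1 Hp); nia.
Qed.

Lemma open_base a b : kirch_base_ok a b -> kirch_open (kirch_base a b).
Proof.
move=> Hok; split.
  move=> n [k ->]; case: Hok => Ha _; lia.
move=> x Hx; exists a, b; split => //.
Qed.

Lemma list_split (P : nat -> Prop) (s : seq nat) : exists L : seq nat,
  (forall p, p \in L -> p \in s /\ ~ P p) /\ (forall p, p \in s -> ~ P p -> p \in L).
Proof.
elim: s => [|q s [L [H1 H2]]]; first by exists [::].
case: (classic (P q)) => Hq.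
  exists L; split.
    by move=> p /H1 [? ?]; rewrite in_cons; split => //; apply/orP; right.
  move=> p; rewrite in_cons => /orP [/eqP ->|] //; exact: H2.
exists (q :: L); split.
  move=> p; rewrite !in_cons => /orP [/eqP ->|/H1 [? ?]]; first by rewrite eqxx.
  by split => //; apply/orP; right.
move=> p; rewrite !in_cons => /orP [/eqP -> _|Hs Hp]; first by rewrite eqxx.
by rewrite H2 // orbT.
Qed.

Lemma mem_le_sumn s p : p \in s -> p <= sumn s.
Proof.
elim: s => //= q s IH; rewrite in_cons => /orP [/eqP ->|/IH]; first exact: leq_addr.
move=> H; apply: leq_trans H _; exact: leq_addl.
Qed.

Lemma A_E_bound E p : uniq E -> (forall z, z \in E -> 0 < z) -> 2 <= size E ->
  A_E E p -> p <= sumn E.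
Proof.
case: E => [|z1 [|z2 r]] //= Hu Hpos _ [Hp [k [Hk H]]].
rewrite leqNgt; apply/negP => Hlt.
have H1 := H z1 (mem_head _ _).
have H2 : in_0k_pZ k p z2 by apply: H; rewrite !in_cons eqxx orbT.
have P1 := Hpos z1 (mem_head _ _).
have P2 : 0 < z2 by apply: Hpos; rewrite !in_cons eqxx orbT.
have L1 : z1 < p by lia.
have L2 : z2 < p by lia.
move: Hu; rewrite in_cons negb_or => /andP [/andP [Hne _] _].
move: H1 H2; rewrite /in_0k_pZ (modn_small L1) (modn_small L2) mod0n.
case=> E1; first by lia.
case=> E2; first by lia.
by move: Hne; rewrite E1 E2 eqxx.
Qed.

Lemma collect_bases (E : seq nat) (U : nat -> nset) :
  (forall x, x \in E -> kirch_open (U x) /\ U x x) ->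
  exists M, forall x, x \in E -> exists a b, kirch_base_ok a b /\ kirch_base a b x /\
     (forall n, kirch_base a b n -> U x n) /\ b <= M.
Proof.
elim: E => [|z E IH] H; first by exists 0.
case: IH => [x Hx|M HM]; first by apply: H; rewrite in_cons Hx orbT.
have [[_ Ho] Hz] := H z (mem_head _ _).
have [a [b [Hok [Hb Hs]]]] := Ho z Hz.
exists (M + b) => x; rewrite in_cons => /orP [/eqP ->|/HM [a' [b' [? [? [? ?]]]]]].
  exists a, b; do 3 split => //; exact: leq_addl.
exists a', b'; do 3 split => //; lia.
Qed.

Lemma dvd_base a b p k : prime p -> coprime a b -> p %| b -> p %| a + b * k -> False.
Proof.
move=> Hp Hc Hb Hx; apply: (cop_prime_false Hc Hp) => //.
by move: Hx; rewrite dvdn_addl // dvdn_mulr.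
Qed.

Unset Implicit Arguments.
Theorem lemma3p4 (E : seq nat) (alpha : nat -> nat) :
  uniq E -> (forall z, z \in E -> 0 < z) -> 2 <= size E ->
  is_alpha_E E alpha ->
  forall B : nat -> Prop, (forall n, B n -> 0 < n) ->
    (F_E E B <->
     exists L : seq nat,
       (forall p, p \in L -> prime p /\ ~ A_E E p) /\
       (forall n, 0 < n ->
          (forall p, p \in L -> multN p n) ->
          (forall p, A_E E p -> ~ Pi_E E p -> in_0k_pZ (alpha p) p n) ->
          B n)).
Proof.
move=> Hu Hpos Hsz [Ha1 [Ha2 Ha3]] B HB; split.
- case=> U [HU HUB].
  have [M HM] := collect_bases HU.
  have [L [HL1 HL2]] := list_split (fun p => A_E E p) [seq p <- iota 0 M.+1 | prime p].
  exists L; split.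
    by move=> p /HL1 [+ ?]; rewrite mem_filter => /andP [? _].
  move=> n Hn HL HA; apply: HUB => x Hx.
  have [a [b [[Ha0 [Hb0 [Hcab Hsb]]] [[k Hxk] [Hsub HbM]]]]] := HM x Hx.
  split => // V [_ HV] Vn.
  have [c [d [[Hc0 [Hd0 [Hccd Hsd]]] [[j Hnj] HVs]]]] := HV n Vn.
  have [y [Hy1 Hy2]] : exists y, y = x %[mod b] /\ y = n %[mod d].
    apply: gen_crt => // p Hp Hpb Hpd.
    have Hpx : ~~ (p %| x) by apply/negP; rewrite Hxk; exact: dvd_base Hp Hcab Hpb.
    have Hpn : ~~ (p %| n) by apply/negP; rewrite Hnj; exact: dvd_base Hp Hccd Hpd.
    case: (classic (A_E E p)) => HAp.
      have HnPi : ~ Pi_E E p by case=> _ /(_ x Hx); apply/negP.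
      have [_ Hax] := Ha1 p HAp.
      case: (HA p HAp HnPi) => Hna.
        by move: Hpn; rewrite /dvdn Hna mod0n.
      case: (Hax x Hx) => Hxa.
        by move: Hpx; rewrite /dvdn Hxa mod0n.
      by rewrite Hna Hxa.
    have HpL : p \in L.
      apply: HL2 => //; rewrite mem_filter Hp mem_iota /= add0n ltnS.
      exact: leq_trans (dvdn_leq Hb0 Hpb) HbM.
    have [m [_ Hm]] := HL p HpL.
    by move: Hpn; rewrite Hm dvdn_mulr.
  set y' := y + b * d * (x + n).
  have Ey'b : y' = x %[mod b] by rewrite /y' [b * d]mulnC mulnAC addnC modnMDl.
  have Ey'd : y' = c %[mod d].
    rewrite /y' mulnAC addnC modnMDl Hy2 Hnj addnC mulnC modnMDl //.
  have Hge : x + n <= y'.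
    by rewrite /y'; apply: leq_trans (leq_addl y _); apply: leq_pmull; rewrite muln_gt0 Hb0 Hd0.
  exists y'; split.
    apply: HVs; apply: mod_eq_add => //; lia.
  have [i Hi] := mod_eq_add (leq_trans (leq_addr n x) Hge) Ey'b.
  apply: Hsub; exists (k + i); rewrite Hi Hxk; lia.
- case=> L [HL HB'].
  set N := sumn L + sumn E.
  exists (fun x => kirch_base x (sqfprod x N)); split.
    move=> x Hx; split; last by exists 0; lia.
    apply: open_base; split; [exact: (Hpos x Hx)|split; [exact: sqfprod_gt0|split; [exact: sqfprod_cop|exact: sqfprod_sqf]]].
  move=> n Hcl.
  have Hn : 0 < n.
    have Hz : nth 0 E 0 \in E by apply: mem_nth; exact: ltnW Hsz.
    by case: (Hcl _ Hz).
  have C : forall p x, prime p -> p <= N -> x \in E -> ~~ (p %| x) -> in_0k_pZ x p n.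
    move=> p x Hp HpN Hx Hpx; rewrite /in_0k_pZ mod0n.
    case: (eqVneq (n %% p) 0) => [|H0]; first by left.
    case: (eqVneq (n %% p) (x %% p)) => [|H1]; first by right.
    exfalso.
    have Hpn : ~~ (p %| n) by rewrite /dvdn H0.
    have [_ Hcx] := Hcl x Hx.
    have Vn : kirch_base n p n by exists 0; rewrite muln0 addn0.
    have [y [[k Hyk] [i Hyi]]] := Hcx _ (open_base (base_ok_prime Hp Hn Hpn)) Vn.
    have [q Hq] := dvdnP (sqfprod_dvd Hp HpN Hpx).
    move: H1; rewrite -(_ : y %% p = n %% p); last by rewrite Hyk addnC mulnC modnMDl.
    by rewrite Hyi Hq mulnAC addnC modnMDl eqxx.
  apply: HB' => //.
    move=> p HpL; have [Hp HnA] := HL p HpL.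
    have HpN : p <= N by rewrite /N; apply: leq_trans (leq_addr _ _); exact: mem_le_sumn.
    case Hpn: (p %| n).
      exists (n %/ p); rewrite mulnC divnK //; split => //.
      by rewrite divn_gt0 ?prime_gt0 // dvdn_leq.
    exfalso; apply: HnA; split => //; exists n; split => // z Hz.
    case Hpz: (p %| z).
      by left; move: Hpz; rewrite /dvdn mod0n => /eqP.
    case: (C p z Hp HpN Hz (negbT Hpz)) => H.
      by move: Hpn; rewrite /dvdn H mod0n.
    by right.
  move=> p HAp HnPi.
  have [Hp _] := HAp.
  have HpN : p <= N by rewrite /N; apply: leq_trans (leq_addl _ _); exact: A_E_bound.
  case: (boolP (all (fun z => p %| z) E)) => Hall.
    by exfalso; apply: HnPi; split => // z Hz; move/allP: Hall; apply.
  move/allPn: Hall => [z Hz Hpz].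
  have [_ Haz] := Ha1 p HAp.
  case: (C p z Hp HpN Hz Hpz) => H; first by left.
  case: (Haz z Hz) => Hza.
    by move: Hpz; rewrite /dvdn Hza mod0n.
  by right; rewrite H Hza.
Qed.
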